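(* Let $R$ be a pre-Schreier domain and let $a_1,\dots,a_n\in\operatorname{Sqf} R$ be such that $a_i$ and $a_j$ are relatively prime for all $i\neq j$. Then $a_1a_2\cdots a_n\in\operatorname{Sqf} R$.
   Context: A domain is a commutative ring with identity without zero divisors. A domain $R$ is pre-Schreier if every non-zero $a\in R$ is primal: whenever $a\mid bc$ with $b,c\in R$, there exist $a_1,a_2\in R$ with $a=a_1a_2$, $a_1\mid b$ and $a_2\mid c$. Elements $a,b$ are relatively prime if they have no common non-invertible divisor. $R^{\ast}$ denotes the set of invertible elements of $R$. An element $a\in R$ is square-free if it cannot be written as $a=b^2c$ with $b\in R\setminus R^{\ast}$ and $c\in R$; $\operatorname{Sqf} R$ denotes the set of square-free elements of $R$. *)

(* Defs.v *)
From mathcomp Require Import all_boot all_algebra.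
Set Implicit Arguments. Unset Strict Implicit. Unset Printing Implicit Defensive.
Import GRing.Theory.
Local Open Scope ring_scope.

Definition rdvd (R : idomainType) (a b : R) : Prop := exists k : R, b = a * k.

Definition primal (R : idomainType) (a : R) : Prop :=
  forall b c : R, rdvd a (b * c) ->
    exists a1 a2 : R, a = a1 * a2 /\ rdvd a1 b /\ rdvd a2 c.

Definition pre_schreier (R : idomainType) : Prop :=
  forall a : R, a != 0 -> primal a.

Definition rel_prime (R : idomainType) (a b : R) : Prop :=
  forall d : R, rdvd d a -> rdvd d b -> d \is a GRing.unit.

Definition square_free (R : idomainType) (a : R) : Prop :=
  ~ exists b c : R, b \isn't a GRing.unit /\ a = b ^+ 2 * c.

(* Main.v *)
Require Import Defs.
From mathcomp Require Import all_boot all_algebra.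
From mathcomp Require Import ring.
Local Open Scope ring_scope.
Import GRing.Theory.

Section Aux.
Variable R : idomainType.

Lemma rdvd_trans (a b c : R) : rdvd a b -> rdvd b c -> rdvd a c.
Proof. by move=> [k ->] [l ->]; exists (k * l); rewrite mulrA. Qed.

Arguments rdvd_trans {a b c}.

Lemma rel_primeC (a b : R) : rel_prime a b -> rel_prime b a.
Proof. by move=> H d h1 h2; apply: H. Qed.

Lemma rel_prime1 (a : R) : rel_prime a 1.
Proof.
move=> d _ [k Hk]; apply/unitrP; exists k; split=> //; by rewrite mulrC.
Qed.

Lemma rel_primeM (x b c : R) : pre_schreier R ->
  rel_prime x b -> rel_prime x c -> rel_prime x (b * c).
Proof.
move=> PS hb hc d dx dbc.
case: (eqVneq d 0) => [d0|dn0].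
  subst d; case: dbc => k; rewrite mul0r => /eqP; rewrite mulf_eq0 => /orP [/eqP b0|/eqP c0].
    by apply: hb => //; exists 0; rewrite b0 mul0r.
  by apply: hc => //; exists 0; rewrite c0 mul0r.
have [d1 [d2 [Ed [h1 h2]]]] := PS d dn0 b c dbc.
subst d.
rewrite unitrM; apply/andP; split.
  apply: hb => //; apply: (rdvd_trans _ dx); by exists d2.
apply: hc => //; apply: (rdvd_trans _ dx); exists d1; by rewrite mulrC.
Qed.

Lemma aux (x y b1 k1 k2 s : R) : pre_schreier R -> square_free x ->
  rel_prime x y -> b1 != 0 -> x = b1 * k1 -> rdvd k2 y -> k1 * k2 = b1 * s ->
  b1 \is a GRing.unit.
Proof.
move=> PS sx rxy nb1 Ex dk2 Ek.
have [e1 [e2 [Eb [[m1 Em1] [m2 Em2]]]]] := PS b1 nb1 k1 k2 (ex_intro _ s Ek).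
have ue2 : e2 \is a GRing.unit.
  apply: rxy; first by exists (e1 * k1); rewrite Ex Eb; ring.
  by apply: rdvd_trans dk2; exists m2.
case: (boolP (b1 \is a GRing.unit)) => // nb1u; exfalso; apply: sx.
exists b1, (e2^-1 * m1); split=> //.
have He1 : e1 = b1 * e2^-1 by rewrite Eb mulrK.
by rewrite Ex Em1 He1 expr2; ring.
Qed.

Lemma sqf0 : ~ square_free (0 : R).
Proof. move=> H; apply: H; exists 0, 0; split; first by rewrite unitr0. by rewrite mulr0. Qed.

Lemma sqf_mul (x y : R) : pre_schreier R -> square_free x -> square_free y ->
  rel_prime x y -> square_free (x * y).
Proof.
move=> PS sx sy rxy [b [c [nb E]]].
have x0 : x != 0 by apply/eqP=> h; subst; exact: sqf0.
have y0 : y != 0 by apply/eqP=> h; subst; exact: sqf0.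
have b0 : b != 0.
  apply/eqP=> h; move: E; rewrite h expr2 !mul0r => /eqP; rewrite mulf_eq0.
  by rewrite (negPf x0) (negPf y0).
have dxy : rdvd b (x * y) by exists (b * c); rewrite E expr2 mulrA.
have [b1 [b2 [Eb [[k1 Ex] [k2 Ey]]]]] := PS b b0 x y dxy.
have b120 : b1 * b2 != 0 by rewrite -Eb.
have Ek : k1 * k2 = b1 * b2 * c.
  apply: (mulfI b120).
  have -> : b1 * b2 * (k1 * k2) = x * y by rewrite Ex Ey; ring.
  by rewrite E -Eb expr2; ring.
have b10 : b1 != 0 by move: b120; rewrite mulf_eq0 negb_or => /andP[].
have b20 : b2 != 0 by move: b120; rewrite mulf_eq0 negb_or => /andP[].
have u1 : b1 \is a GRing.unit.
  have dk : rdvd k2 y by exists b2; rewrite Ey mulrC.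
  apply: (aux _ _ _ _ _ (b2 * c) PS sx rxy b10 Ex dk).
  by rewrite Ek mulrA.
have u2 : b2 \is a GRing.unit.
  have dk : rdvd k1 x by exists b1; rewrite Ex mulrC.
  apply: (aux _ _ _ _ _ (b1 * c) PS sy (rel_primeC _ _ rxy) b20 Ey dk).
  by rewrite mulrC Ek; ring.
by move: nb; rewrite Eb unitrM u1 u2.
Qed.

End Aux.

Theorem lemma2 (R : idomainType) (n : nat) (a : 'I_n -> R) :
  pre_schreier R ->
  (forall i, square_free (a i)) ->
  (forall i j, i != j -> rel_prime (a i) (a j)) ->
  square_free (\prod_(i < n) a i).
Proof.
move=> PS; elim: n a => [|n IH] a sa ra.
  rewrite big_ord0 => -[b [c [/negP nb E]]]; apply: nb.
  apply/unitrP; exists (b * c); split; rewrite E expr2; ring.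
rewrite big_ord_recr /=.
apply: sqf_mul => //.
  apply: IH => // i j ij; apply: ra.
  by apply: contra ij => /eqP [] /val_inj ->.
apply: rel_primeC.
have : forall m (f : 'I_m -> R), (forall i, rel_prime (a ord_max) (f i)) ->
    rel_prime (a ord_max) (\prod_(i < m) f i).
  elim=> [|m IHm] f hf; first by rewrite big_ord0; exact: rel_prime1.
  by rewrite big_ord_recr /=; apply: rel_primeM => //; apply: IHm.
apply=> i; apply: ra.
apply/eqP=> /(congr1 val) /= /eqP; rewrite eqn_leq [(n <= _)%N]leqNgt ltn_ord.
by case/andP.
Qed.
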